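(* Let $A_1A_2A_3A_4$ be a (non-degenerate) tetrahedron in $\mathbb{R}^3$ with $A_1A_4+A_2A_3>A_1A_2+A_3A_4$. Let $F$ be a minimizer of $X\mapsto |A_1X|+|A_2X|+|A_3X|+|A_4X|$ lying in the interior of the tetrahedron, and let $T_{12}$, $T_{34}$ be the points where the line through $F$ meeting both lines $A_1A_2$ and $A_3A_4$ intersects these lines. Let $A_1''\in$ line $A_1A_2$, $A_4''\in$ line $A_3A_4$ be the endpoints of the common perpendicular of the two (skew) lines, $H=|A_1''A_4''|$, and assume $A_1''\notin[A_1,A_2]$ with $A_1$ between $A_1''$ and $A_2$, and $A_4''\notin[A_4,A_3]$ with $A_4$ between $A_4''$ and $A_3$. Let $\varphi$ be the angle between $\overrightarrow{A_1A_2}$ and $\overrightarrow{A_4A_3}$, $a_{12}=|A_1A_2|$, $a_{34}=|A_3A_4|$, $M_{12},M_{34}$ the midpoints of $A_1A_2$, $A_3A_4$, and put $t_{12}=|A_1''T_{12}|$, $t_{34}=|A_4''T_{34}|$, $k_1=|A_1''A_1|$, $k_2=|A_4''A_4|$, $m_{12}=|A_1''M_{12}|$, $m_{34}=|A_4''M_{34}|$, $\theta=\angle A_4FA_3$. Then $$\frac{t_{34}-t_{12}\cos\varphi}{\sqrt{H^2+t_{12}^2\sin^2\varphi}}=\frac{m_{34}-t_{34}}{\frac{a_{34}}{2}\tan\frac{\theta}{2}},\qquad \frac{t_{12}-t_{34}\cos\varphi}{\sqrt{H^2+t_{34}^2\sin^2\varphi}}=\frac{m_{12}-t_{12}}{\frac{a_{12}}{2}\tan\frac{\theta}{2}},$$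 and $$\cot\frac{\theta}{2}=\frac{H^2+k_1(t_{12}-t_{34}\cos\varphi)+k_2(t_{34}-t_{12}\cos\varphi)}{(t_{12}-k_1)\sqrt{H^2+t_{34}^2\sin^2\varphi}+(t_{34}-k_2)\sqrt{H^2+t_{12}^2\sin^2\varphi}}.$$
   Context: $|XY|$ denotes Euclidean distance and $\angle XYZ\in[0,\pi]$ the angle at $Y$. $F$ is the (unweighted) Fermat–Torricelli point of the four vertices; the line $T_{12}T_{34}$ through $F$ is called its Simpson line. *)

(* Defs.v *)
From Stdlib Require Import Reals Lra.
From Stdlib Require Export Reals.
Open Scope R_scope.

Definition pt := (R * R * R)%type.

Definition px (p : pt) : R := fst (fst p).
Definition py (p : pt) : R := snd (fst p).
Definition pz (p : pt) : R := snd p.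

Definition mkpt (x y z : R) : pt := (x, y, z).

Definition vadd (p q : pt) : pt := mkpt (px p + px q) (py p + py q) (pz p + pz q).
Definition vsub (p q : pt) : pt := mkpt (px p - px q) (py p - py q) (pz p - pz q).
Definition vscale (a : R) (p : pt) : pt := mkpt (a * px p) (a * py p) (a * pz p).

Definition dot (p q : pt) : R := px p * px q + py p * py q + pz p * pz q.
Definition vnorm (p : pt) : R := sqrt (dot p p).

Definition edist (X Y : pt) : R := vnorm (vsub X Y).

Definition vangle (u v : pt) : R := acos (dot u v / (vnorm u * vnorm v)).

Definition angle (X Y Z : pt) : R := vangle (vsub X Y) (vsub Z Y).

Definition lerp (P Q : pt) (s : R) : pt := vadd P (vscale s (vsub Q P)).

Definition midpoint (P Q : pt) : pt := lerp P Q (1/2).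

Definition on_line (X P Q : pt) : Prop := exists s : R, X = lerp P Q s.

Definition det3 (u v w : pt) : R :=
  px u * (py v * pz w - pz v * py w)
  - py u * (px v * pz w - pz v * px w)
  + pz u * (px v * py w - py v * px w).

Definition nondegenerate_tetra (A1 A2 A3 A4 : pt) : Prop :=
  det3 (vsub A2 A1) (vsub A3 A1) (vsub A4 A1) <> 0.

Definition in_tetra_interior (A1 A2 A3 A4 X : pt) : Prop :=
  exists l1 l2 l3 l4 : R,
    0 < l1 /\ 0 < l2 /\ 0 < l3 /\ 0 < l4 /\ l1 + l2 + l3 + l4 = 1 /\
    X = vadd (vadd (vscale l1 A1) (vscale l2 A2)) (vadd (vscale l3 A3) (vscale l4 A4)).

Definition sumdist (A1 A2 A3 A4 X : pt) : R :=
  edist A1 X + edist A2 X + edist A3 X + edist A4 X.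

Definition is_FT_point (A1 A2 A3 A4 F : pt) : Prop :=
  forall X : pt, sumdist A1 A2 A3 A4 F <= sumdist A1 A2 A3 A4 X.

Definition strictly_between (A B C : pt) : Prop :=
  exists s : R, 0 < s < 1 /\ B = lerp A C s.

(* Main.v *)
Require Import Defs.
From Stdlib Require Import Reals Lra Psatz.
From Coquelicot Require Coquelicot.
Open Scope R_scope.

Lemma half_cot (q : R) : -1 < q < 1 ->
  cos (acos q / 2) / sin (acos q / 2) = (1 + q) / sqrt (1 - q ^ 2) /\
  sin (acos q / 2) / cos (acos q / 2) = sqrt (1 - q ^ 2) / (1 + q).
Proof.
  intros Hq.
  pose proof (acos_bound_lt q Hq) as Hb.
  set (h := acos q / 2).
  assert (Hth : acos q = 2 * h) by (unfold h; field).
  pose proof PI_RGT_0.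
  assert (Hs : 0 < sin h) by (apply sin_gt_0; unfold h; lra).
  assert (Hc : 0 < cos h) by (apply cos_gt_0; unfold h; lra).
  assert (Hcq : q = 2 * cos h * cos h - 1).
  { rewrite <- cos_2a_cos, <- Hth, cos_acos; lra. }
  assert (Hsq : sqrt (1 - q ^ 2) = 2 * sin h * cos h).
  { rewrite <- sin_2a, <- Hth, sin_acos by lra. unfold Rsqr. f_equal. ring. }
  rewrite Hsq. split.
  - rewrite Hcq. field. lra.
  - rewrite Hcq. field. lra.
Qed.

Lemma tri (q3 q4 X0 Y0 r3 r4 : R) :
  q4 < q3 -> 0 < Y0 -> 0 < r3 -> 0 < r4 ->
  r3 ^ 2 = (q3 + X0) ^ 2 + Y0 ^ 2 -> r4 ^ 2 = (q4 + X0) ^ 2 + Y0 ^ 2 ->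
  q3 * r4 + q4 * r3 = 0 ->
  let q := ((q3 + X0) * (q4 + X0) + Y0 ^ 2) / (r3 * r4) in
  (-1 < q < 1 /\ 0 < q3 /\ q4 < 0) /\
  X0 / Y0 = (q3 + q4) * ((1 + q) / sqrt (1 - q ^ 2)) / (q3 - q4) /\
  (1 + q) / sqrt (1 - q ^ 2) * (- q4 * Y0) = q4 * X0 + X0 ^ 2 + Y0 ^ 2 /\
  2 + 2 * q = (1 / r3 + 1 / r4) ^ 2 * (X0 ^ 2 + Y0 ^ 2).
Proof.
  intros Hq Hy H3 H4 E3 E4 E q.
  assert (Hq3 : 0 < q3) by nra.
  assert (Hq4 : q4 < 0) by nra.
  set (W := X0 ^ 2 + Y0 ^ 2).
  set (P := (q3 + X0) * (q4 + X0) + Y0 ^ 2).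
  assert (HG : 2 * q3 * q4 * X0 + (q3 + q4) * W = 0).
  { assert (A : q4 ^ 2 * r3 ^ 2 - q3 ^ 2 * r4 ^ 2 = 0).
    { assert (q3 * r4 = - (q4 * r3)) by lra.
      replace (q3 ^ 2 * r4 ^ 2) with ((q3 * r4) ^ 2) by ring.
      rewrite H; ring. }
    rewrite E3, E4 in A.
    assert (B : (q4 - q3) * (2 * q3 * q4 * X0 + (q3 + q4) * W) = 0)
      by (rewrite <- A; unfold W; ring).
    apply Rmult_integral in B. destruct B as [B|B]; [lra|exact B]. }
  assert (Hr4 : r4 = - q4 * r3 / q3) by (field_simplify_eq; lra).
  assert (Hr34 : r3 * r4 = - q4 * r3 ^ 2 / q3) by (rewrite Hr4; field; lra).
  assert (Hlag : (r3 * r4) ^ 2 - P ^ 2 = (Y0 * (q3 - q4)) ^ 2).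
  { replace ((r3 * r4) ^ 2) with (r3 ^ 2 * r4 ^ 2) by ring.
    rewrite E3, E4. unfold P. ring. }
  assert (Hpos : 0 < r3 * r4) by nra.
  set (t := Y0 * (q3 - q4) / (r3 * r4)).
  assert (Ht : 0 < t) by (apply Rdiv_lt_0_compat; nra).
  assert (Heq : 1 - q ^ 2 = t ^ 2).
  { unfold t. replace ((Y0 * (q3 - q4) / (r3 * r4)) ^ 2) with (((r3 * r4) ^ 2 - P ^ 2) / (r3 * r4) ^ 2)
      by (rewrite Hlag; field; lra).
    unfold q. fold P. field. lra. }
  assert (Hsq : sqrt (1 - q ^ 2) = t) by (rewrite Heq; apply sqrt_pow2; lra).
  assert (Hqb : -1 < q < 1) by nra.
  assert (HK : (1 + q) / sqrt (1 - q ^ 2) = (r3 * r4 + P) / (Y0 * (q3 - q4))).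
  { rewrite Hsq. unfold t, q. fold P. field. repeat split; nra. }
  rewrite HK. fold W.
  assert (HS : r3 * r4 + P = (q3 - q4) * (q3 * X0 + W) / q3)
    by (rewrite Hr34, E3; unfold P, W; field; lra).
  assert (HG2 : (q4 - q3) * (2 * q3 * q4 * X0 + (q3 + q4) * W) = 0) by (rewrite HG; ring).
  split; [tauto|].
  split; [|split].
  - rewrite HS. field_simplify_eq; [|repeat split; lra]. lra.
  - rewrite HS. field_simplify_eq; [|repeat split; lra]. unfold W in *. lra.
  - unfold q. fold P. rewrite Hr4. field_simplify_eq; [|repeat split; lra]. rewrite E3. unfold P, W in *. lra.
Qed.

Definition gram (L1 L2 c H a b g a' b' g' : R) : R :=
  a * a' * L1 ^ 2 + (a * b' + a' * b) * c * L1 * L2 + b * b' * L2 ^ 2 + g * g' * H ^ 2.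

Lemma core (L1 L2 H c s1 s2 t1 t2 l r1 r2 r3 r4 : R) :
  0 < L1 -> 0 < L2 -> 0 < H -> c ^ 2 < 1 -> 0 < s1 < 1 -> 0 < s2 < 1 ->
  0 < r1 -> 0 < r2 -> 0 < r3 -> 0 < r4 ->
  r1 ^ 2 = gram L1 L2 c H (s1 - (1-l)*t1) (-l*t2) (-l) (s1 - (1-l)*t1) (-l*t2) (-l) ->
  r2 ^ 2 = gram L1 L2 c H (1 - (1-l)*t1) (-l*t2) (-l) (1 - (1-l)*t1) (-l*t2) (-l) ->
  r3 ^ 2 = gram L1 L2 c H (-(1-l)*t1) (1 - l*t2) (1-l) (-(1-l)*t1) (1 - l*t2) (1-l) ->
  r4 ^ 2 = gram L1 L2 c H (-(1-l)*t1) (s2 - l*t2) (1-l) (-(1-l)*t1) (s2 - l*t2) (1-l) ->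
  (s1 - (1-l)*t1) / r1 + (1 - (1-l)*t1) / r2 + (-(1-l)*t1) / r3 + (-(1-l)*t1) / r4 = 0 ->
  (-l*t2) / r1 + (-l*t2) / r2 + (1 - l*t2) / r3 + (s2 - l*t2) / r4 = 0 ->
  (-l) / r1 + (-l) / r2 + (1-l) / r3 + (1-l) / r4 = 0 ->
  let q := gram L1 L2 c H (-(1-l)*t1) (s2 - l*t2) (1-l) (-(1-l)*t1) (1 - l*t2) (1-l) / (r4 * r3) in
  (0 < t1 /\ 0 < t2) /\
  (t2 * L2 - t1 * L1 * c) / sqrt (H ^ 2 + (t1 * L1) ^ 2 * (1 - c ^ 2))
    = ((1 + s2) / 2 * L2 - t2 * L2) / ((1 - s2) * L2 / 2 * (sin (acos q / 2) / cos (acos q / 2))) /\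
  (t1 * L1 - t2 * L2 * c) / sqrt (H ^ 2 + (t2 * L2) ^ 2 * (1 - c ^ 2))
    = ((1 + s1) / 2 * L1 - t1 * L1) / ((1 - s1) * L1 / 2 * (sin (acos q / 2) / cos (acos q / 2))) /\
  cos (acos q / 2) / sin (acos q / 2)
    = (H ^ 2 + s1 * L1 * (t1 * L1 - t2 * L2 * c) + s2 * L2 * (t2 * L2 - t1 * L1 * c))
      / ((t1 * L1 - s1 * L1) * sqrt (H ^ 2 + (t2 * L2) ^ 2 * (1 - c ^ 2))
         + (t2 * L2 - s2 * L2) * sqrt (H ^ 2 + (t1 * L1) ^ 2 * (1 - c ^ 2))).
Proof.
  intros HL1 HL2 HH Hc Hs1 Hs2 Hr1 Hr2 Hr3 Hr4 G1 G2 G3 G4 EU EV EN q.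
  assert (E1 : (s1 - t1) / r1 + (1 - t1) / r2 = 0).
  { replace ((s1 - t1) / r1 + (1 - t1) / r2) with
      ((s1 - (1-l)*t1) / r1 + (1 - (1-l)*t1) / r2 + (-(1-l)*t1) / r3 + (-(1-l)*t1) / r4
       + t1 * ((-l) / r1 + (-l) / r2 + (1-l) / r3 + (1-l) / r4)) by (field; lra).
    rewrite EU, EN. ring. }
  assert (E2 : (1 - t2) / r3 + (s2 - t2) / r4 = 0).
  { replace ((1 - t2) / r3 + (s2 - t2) / r4) with
      ((-l*t2) / r1 + (-l*t2) / r2 + (1 - l*t2) / r3 + (s2 - l*t2) / r4
       - t2 * ((-l) / r1 + (-l) / r2 + (1-l) / r3 + (1-l) / r4)) by (field; lra).
    rewrite EV, EN. ring. }
  assert (Hl : 0 < l < 1).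
  { assert (0 < / r1) by (apply Rinv_0_lt_compat; lra).
    assert (0 < / r2) by (apply Rinv_0_lt_compat; lra).
    assert (0 < / r3) by (apply Rinv_0_lt_compat; lra).
    assert (0 < / r4) by (apply Rinv_0_lt_compat; lra).
    unfold Rdiv in EN. nra. }
  set (S12 := sqrt (H ^ 2 + (t1 * L1) ^ 2 * (1 - c ^ 2))).
  set (S34 := sqrt (H ^ 2 + (t2 * L2) ^ 2 * (1 - c ^ 2))).
  assert (HS12 : S12 ^ 2 = H ^ 2 + (t1 * L1) ^ 2 * (1 - c ^ 2))
    by (unfold S12; rewrite pow2_sqrt; [reflexivity| nra]).
  assert (HS34 : S34 ^ 2 = H ^ 2 + (t2 * L2) ^ 2 * (1 - c ^ 2))
    by (unfold S34; rewrite pow2_sqrt; [reflexivity| nra]).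
  assert (PS12 : 0 < S12) by (unfold S12; apply sqrt_lt_R0; nra).
  assert (PS34 : 0 < S34) by (unfold S34; apply sqrt_lt_R0; nra).
  pose proof (tri ((1 - t2) * L2) ((s2 - t2) * L2) ((1 - l) * (t2 * L2 - t1 * L1 * c))
                  ((1 - l) * S12) r3 r4) as T2.
  destruct T2 as [[Hqb2 [Hq32 Hq42]] [Ta2 [Tb2 Tc2]]].
  { apply Rmult_lt_compat_r; lra. }
  { apply Rmult_lt_0_compat; lra. }
  { lra. }
  { lra. }
  { rewrite G3. unfold gram. replace (((1 - l) * S12) ^ 2) with ((1 - l) ^ 2 * S12 ^ 2) by ring.
    rewrite HS12. ring. }
  { rewrite G4. unfold gram. replace (((1 - l) * S12) ^ 2) with ((1 - l) ^ 2 * S12 ^ 2) by ring.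
    rewrite HS12. ring. }
  { apply (Rmult_eq_reg_r (/ (r3 * r4) * / L2)).
    - rewrite Rmult_0_l. rewrite <- E2. field. lra.
    - apply Rgt_not_eq. apply Rmult_gt_0_compat; apply Rinv_0_lt_compat;
      [apply Rmult_lt_0_compat| ]; assumption. }
  pose proof (tri ((1 - t1) * L1) ((s1 - t1) * L1) (l * (t1 * L1 - t2 * L2 * c))
                  (l * S34) r2 r1) as T1.
  destruct T1 as [[Hqb1 [Hq31 Hq41]] [Ta1 [Tb1 Tc1]]].
  { apply Rmult_lt_compat_r; lra. }
  { apply Rmult_lt_0_compat; lra. }
  { lra. }
  { lra. }
  { rewrite G2. unfold gram. replace ((l * S34) ^ 2) with (l ^ 2 * S34 ^ 2) by ring.
    rewrite HS34. ring. }
  { rewrite G1. unfold gram. replace ((l * S34) ^ 2) with (l ^ 2 * S34 ^ 2) by ring.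
    rewrite HS34. ring. }
  { apply (Rmult_eq_reg_r (/ (r1 * r2) * / L1)).
    - rewrite Rmult_0_l. rewrite <- E1. field. lra.
    - apply Rgt_not_eq. apply Rmult_gt_0_compat; apply Rinv_0_lt_compat;
      [apply Rmult_lt_0_compat| ]; assumption. }
  assert (Q2 : ((((1 - t2) * L2) + ((1 - l) * (t2 * L2 - t1 * L1 * c))) *
                (((s2 - t2) * L2) + ((1 - l) * (t2 * L2 - t1 * L1 * c))) + ((1 - l) * S12) ^ 2)
               / (r3 * r4) = q).
  { unfold q. replace (((1 - l) * S12) ^ 2) with ((1 - l) ^ 2 * S12 ^ 2) by ring.
    rewrite HS12. unfold gram. field. lra. }
  rewrite Q2 in Hqb2, Ta2, Tb2, Tc2. clear Q2.
  match type of Tc1 with 2 + 2 * ?x = _ => set (Q1 := x) in * end.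
  set (DD := H ^ 2 + t1 ^ 2 * L1 ^ 2 + t2 ^ 2 * L2 ^ 2 - 2 * t1 * t2 * L1 * L2 * c).
  assert (D1 : (l * (t1 * L1 - t2 * L2 * c)) ^ 2 + (l * S34) ^ 2 = l ^ 2 * DD).
  { replace ((l * S34) ^ 2) with (l ^ 2 * S34 ^ 2) by ring. rewrite HS34. unfold DD. ring. }
  assert (D2 : ((1 - l) * (t2 * L2 - t1 * L1 * c)) ^ 2 + ((1 - l) * S12) ^ 2 = (1 - l) ^ 2 * DD).
  { replace (((1 - l) * S12) ^ 2) with ((1 - l) ^ 2 * S12 ^ 2) by ring. rewrite HS12. unfold DD. ring. }
  assert (EN' : l * (1 / r1 + 1 / r2) = (1 - l) * (1 / r3 + 1 / r4)).
  { apply Rminus_diag_uniq.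
    replace (l * (1 / r1 + 1 / r2) - (1 - l) * (1 / r3 + 1 / r4)) with
      (- ((-l) / r1 + (-l) / r2 + (1-l) / r3 + (1-l) / r4)) by (field; repeat split; lra).
    rewrite EN. ring. }
  assert (HQ : Q1 = q).
  { assert (2 + 2 * Q1 = 2 + 2 * q); [|lra].
    rewrite Tc1, Tc2, D1, D2.
    replace ((1 / r2 + 1 / r1) ^ 2 * (l ^ 2 * DD)) with ((l * (1 / r1 + 1 / r2)) ^ 2 * DD) by ring.
    rewrite EN'. ring. }
  rewrite HQ in Ta1, Tb1. clear Tc1 Tc2 HQ.
  destruct (half_cot q Hqb2) as [HC HT].
  rewrite HC, HT.
  assert (Hsq : 0 < sqrt (1 - q ^ 2)).
  { apply sqrt_lt_R0. replace (1 - q ^ 2) with ((1 - q) * (1 + q)) by ring.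
    apply Rmult_lt_0_compat; lra. }
  set (sq := sqrt (1 - q ^ 2)) in *.
  assert (Ht1 : s1 < t1).
  { assert (h : (s1 - t1) * L1 < 0 * L1) by lra.
    pose proof (Rmult_lt_reg_r L1 (s1 - t1) 0 HL1 h). lra. }
  assert (Ht2 : s2 < t2).
  { assert (h : (s2 - t2) * L2 < 0 * L2) by lra.
    pose proof (Rmult_lt_reg_r L2 (s2 - t2) 0 HL2 h). lra. }
  split; [split; lra|].
  split; [|split].
  - replace ((t2 * L2 - t1 * L1 * c) / S12) with
      (((1 - l) * (t2 * L2 - t1 * L1 * c)) / ((1 - l) * S12)) by (field; lra).
    rewrite Ta2. field. repeat split; lra.
  - replace ((t1 * L1 - t2 * L2 * c) / S34) with
      ((l * (t1 * L1 - t2 * L2 * c)) / (l * S34)) by (field; lra).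
    rewrite Ta1. field. repeat split; lra.
  - set (K := (1 + q) / sq) in *.
    assert (K2 : K * ((t2 * L2 - s2 * L2) * S12) = (s2 - t2) * L2 * (t2 * L2 - t1 * L1 * c) + (1 - l) * DD).
    { apply (Rmult_eq_reg_l (1 - l)); [|lra].
      replace ((1 - l) * ((s2 - t2) * L2 * (t2 * L2 - t1 * L1 * c) + (1 - l) * DD)) with
        ((s2 - t2) * L2 * ((1 - l) * (t2 * L2 - t1 * L1 * c)) +
         ((1 - l) * (t2 * L2 - t1 * L1 * c)) ^ 2 + ((1 - l) * S12) ^ 2) by lra.
      rewrite <- Tb2. ring. }
    assert (K1 : K * ((t1 * L1 - s1 * L1) * S34) = (s1 - t1) * L1 * (t1 * L1 - t2 * L2 * c) + l * DD).
    { apply (Rmult_eq_reg_l l); [|lra].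
      replace (l * ((s1 - t1) * L1 * (t1 * L1 - t2 * L2 * c) + l * DD)) with
        ((s1 - t1) * L1 * (l * (t1 * L1 - t2 * L2 * c)) +
         (l * (t1 * L1 - t2 * L2 * c)) ^ 2 + (l * S34) ^ 2) by lra.
      rewrite <- Tb1. ring. }
    assert (Hden : 0 < (t1 * L1 - s1 * L1) * S34 + (t2 * L2 - s2 * L2) * S12).
    { apply Rplus_lt_0_compat; apply Rmult_lt_0_compat; try assumption;
        [replace (t1 * L1 - s1 * L1) with ((t1 - s1) * L1) by ring
        |replace (t2 * L2 - s2 * L2) with ((t2 - s2) * L2) by ring];
        apply Rmult_lt_0_compat; lra. }
    apply (Rmult_eq_reg_r ((t1 * L1 - s1 * L1) * S34 + (t2 * L2 - s2 * L2) * S12)); [|lra].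
    rewrite Rmult_plus_distr_l, K1, K2. unfold DD. field. lra.
Qed.

Module FTM.
Import Coquelicot.Coquelicot.
Lemma dot_sub_shift (A F e : pt) (h : R) :
  dot (vsub A (vadd F (vscale h e))) (vsub A (vadd F (vscale h e))) =
  dot (vsub A F) (vsub A F) - 2 * h * dot (vsub A F) e + h ^ 2 * dot e e.
Proof.
  destruct A as [[a1 a2] a3]; destruct F as [[f1 f2] f3]; destruct e as [[e1 e2] e3].
  unfold dot, vsub, vadd, vscale, mkpt, px, py, pz; simpl; ring.
Qed.

Lemma min_deriv0 (f : R -> R) (l : R) :
  (forall h, f 0 <= f h) -> is_derive f 0 l -> l = 0.
Proof.
  intros Hmin Hd.
  apply is_derive_Reals in Hd.
  set (pr := exist (fun l0 => derivable_pt_lim f 0 l0) l Hd : derivable_pt f 0).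
  assert (E : derive_pt f 0 pr = l) by reflexivity.
  rewrite <- E.
  apply (deriv_minimum f (-1) 1 0 pr); try lra.
  intros; apply Hmin.
Qed.

Lemma FT_grad (A1 A2 A3 A4 F e : pt) :
  is_FT_point A1 A2 A3 A4 F ->
  0 < dot (vsub A1 F) (vsub A1 F) -> 0 < dot (vsub A2 F) (vsub A2 F) ->
  0 < dot (vsub A3 F) (vsub A3 F) -> 0 < dot (vsub A4 F) (vsub A4 F) ->
  dot (vsub A1 F) e / edist A1 F + dot (vsub A2 F) e / edist A2 F
  + dot (vsub A3 F) e / edist A3 F + dot (vsub A4 F) e / edist A4 F = 0.
Proof.
  intros HFT H1 H2 H3 H4.
  set (w1 := dot (vsub A1 F) (vsub A1 F)); set (w2 := dot (vsub A2 F) (vsub A2 F));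
  set (w3 := dot (vsub A3 F) (vsub A3 F)); set (w4 := dot (vsub A4 F) (vsub A4 F)).
  set (b1 := dot (vsub A1 F) e); set (b2 := dot (vsub A2 F) e);
  set (b3 := dot (vsub A3 F) e); set (b4 := dot (vsub A4 F) e).
  set (ee := dot e e).
  set (f := fun h => sqrt (w1 - 2 * h * b1 + h ^ 2 * ee) + sqrt (w2 - 2 * h * b2 + h ^ 2 * ee)
     + sqrt (w3 - 2 * h * b3 + h ^ 2 * ee) + sqrt (w4 - 2 * h * b4 + h ^ 2 * ee)).
  assert (Hf : forall h, f h = sumdist A1 A2 A3 A4 (vadd F (vscale h e))).
  { intros h. unfold f, sumdist, edist, vnorm. rewrite !dot_sub_shift. reflexivity. }
  assert (Hmin : forall h, f 0 <= f h).
  { intros h. rewrite !Hf.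
    replace (vadd F (vscale 0 e)) with F.
    - apply HFT.
    - destruct F as [[f1 f2] f3]; destruct e as [[e1 e2] e3].
      unfold vadd, vscale, mkpt, px, py, pz; simpl. f_equal; [f_equal|]; ring. }
  assert (Hd : is_derive f 0 (- (b1 / sqrt w1 + b2 / sqrt w2 + b3 / sqrt w3 + b4 / sqrt w4))).
  { unfold f. auto_derive;
    (assert (E0 : forall w b, w + - (2 * 0 * b) + 0 * (0 * 1) * ee = w) by (intros; ring));
    rewrite ?E0.
    - repeat split; [exact H1|exact H2|exact H3|exact H4].
    - assert (0 < sqrt w1) by (apply sqrt_lt_R0; assumption).
      assert (0 < sqrt w2) by (apply sqrt_lt_R0; assumption).
      assert (0 < sqrt w3) by (apply sqrt_lt_R0; assumption).
      assert (0 < sqrt w4) by (apply sqrt_lt_R0; assumption).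
      field; repeat split; apply Rgt_not_eq; assumption. }
  pose proof (min_deriv0 f _ Hmin Hd) as Z. clear Hd Hmin Hf f.
  unfold edist, vnorm. fold w1 w2 w3 w4. lra.
Qed.

End FTM.
Import FTM.

Definition comb (U V N : pt) (a b g : R) : pt :=
  vadd (vadd (vscale a U) (vscale b V)) (vscale g N).

Ltac unf := unfold comb, det3, dot, lerp, midpoint, vsub, vadd, vscale, mkpt, px, py, pz in *; simpl in *.
Ltac dpt X := let a := fresh "x" in let b := fresh "y" in let c := fresh "z" in destruct X as [[a b] c].

Lemma dot_nonneg (w : pt) : 0 <= dot w w.
Proof. dpt w. unf. pose proof (Rle_0_sqr x). pose proof (Rle_0_sqr y). pose proof (Rle_0_sqr z).
  unfold Rsqr in *. lra. Qed.

Lemma sq_zero (a : R) : a * a <= 0 -> a = 0.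
Proof. intros h. assert (a * a = 0) by (apply Rle_antisym; nra).
  apply Rmult_integral in H. tauto. Qed.

Lemma dot_zero_eq (A F : pt) : dot (vsub A F) (vsub A F) = 0 -> A = F.
Proof.
  dpt A; dpt F. unf. intros Hd.
  pose proof (Rle_0_sqr (x - x0)). pose proof (Rle_0_sqr (y - y0)). pose proof (Rle_0_sqr (z - z0)).
  unfold Rsqr in *.
  assert (h1 : x - x0 = 0) by (apply sq_zero; lra).
  assert (h2 : y - y0 = 0) by (apply sq_zero; lra).
  assert (h3 : z - z0 = 0) by (apply sq_zero; lra).
  apply Rminus_diag_uniq in h1; apply Rminus_diag_uniq in h2; apply Rminus_diag_uniq in h3.
  subst. reflexivity.
Qed.

Lemma bary (A1 A2 A3 A4 F : pt) (l1 l2 l3 l4 : R) :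
  l1 + l2 + l3 + l4 = 1 ->
  F = vadd (vadd (vscale l1 A1) (vscale l2 A2)) (vadd (vscale l3 A3) (vscale l4 A4)) ->
  det3 (vsub F A1) (vsub A3 A1) (vsub A4 A1) = l2 * det3 (vsub A2 A1) (vsub A3 A1) (vsub A4 A1) /\
  det3 (vsub A2 A1) (vsub F A1) (vsub A4 A1) = l3 * det3 (vsub A2 A1) (vsub A3 A1) (vsub A4 A1).
Proof.
  intros Hs HF. subst F. assert (l1 = 1 - l2 - l3 - l4) by lra. subst l1.
  dpt A1; dpt A2; dpt A3; dpt A4. unf. split; ring.
Qed.

Lemma interior_ne (A1 A2 A3 A4 F : pt) :
  nondegenerate_tetra A1 A2 A3 A4 -> in_tetra_interior A1 A2 A3 A4 F ->
  0 < dot (vsub A1 F) (vsub A1 F) /\ 0 < dot (vsub A2 F) (vsub A2 F) /\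
  0 < dot (vsub A3 F) (vsub A3 F) /\ 0 < dot (vsub A4 F) (vsub A4 F).
Proof.
  intros Hnd [l1 [l2 [l3 [l4 [H1 [H2 [H3 [H4 [Hs HF]]]]]]]]].
  destruct (bary A1 A2 A3 A4 F l1 l2 l3 l4 Hs HF) as [B1 B2].
  unfold nondegenerate_tetra in Hnd.
  set (D := det3 (vsub A2 A1) (vsub A3 A1) (vsub A4 A1)) in *.
  assert (K : forall X, 0 < dot (vsub X F) (vsub X F) \/ X = F).
  { intros X. destruct (Rle_lt_or_eq_dec 0 _ (dot_nonneg (vsub X F))) as [h|h]; [left; exact h|].
    right. apply dot_zero_eq. auto. }
  repeat split.
  - destruct (K A1) as [h|h]; [exact h|]. exfalso. rewrite <- h in B1.
    assert (l2 * D = 0); [rewrite <- B1; clear; dpt A1; dpt A3; dpt A4; unf; ring|].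
    apply Rmult_integral in H. lra.
  - destruct (K A2) as [h|h]; [exact h|]. exfalso. rewrite <- h in B2.
    assert (l3 * D = 0); [rewrite <- B2; clear; dpt A1; dpt A2; dpt A4; unf; ring|].
    apply Rmult_integral in H. lra.
  - destruct (K A3) as [h|h]; [exact h|]. exfalso. rewrite <- h in B1.
    assert (l2 * D = 0); [rewrite <- B1; clear; dpt A1; dpt A3; dpt A4; unf; ring|].
    apply Rmult_integral in H. lra.
  - destruct (K A4) as [h|h]; [exact h|]. exfalso. rewrite <- h in B1.
    assert (l2 * D = 0); [rewrite <- B1; clear; dpt A1; dpt A3; dpt A4; unf; ring|].
    apply Rmult_integral in H. lra.
Qed.

Lemma indep (U V N : pt) (a b g : R) :
  det3 U V N <> 0 -> comb U V N a b g = mkpt 0 0 0 -> a = 0 /\ b = 0 /\ g = 0.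
Proof.
  intros HD Hc.
  assert (Ea : a * det3 U V N = det3 (comb U V N a b g) V N) by (clear; dpt U; dpt V; dpt N; unf; ring).
  assert (Eb : b * det3 U V N = det3 U (comb U V N a b g) N) by (clear; dpt U; dpt V; dpt N; unf; ring).
  assert (Eg : g * det3 U V N = det3 U V (comb U V N a b g)) by (clear; dpt U; dpt V; dpt N; unf; ring).
  rewrite Hc in Ea, Eb, Eg.
  assert (Z1 : det3 (mkpt 0 0 0) V N = 0) by (clear; dpt V; dpt N; unf; ring).
  assert (Z2 : det3 U (mkpt 0 0 0) N = 0) by (clear; dpt U; dpt N; unf; ring).
  assert (Z3 : det3 U V (mkpt 0 0 0) = 0) by (clear; dpt U; dpt V; unf; ring).
  rewrite Z1 in Ea. rewrite Z2 in Eb. rewrite Z3 in Eg.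
  apply Rmult_integral in Ea; apply Rmult_integral in Eb; apply Rmult_integral in Eg.
  repeat split; tauto.
Qed.

Lemma dot_comb (U V N : pt) a b g a' b' g' :
  dot (comb U V N a b g) (comb U V N a' b' g') =
  a * a' * dot U U + (a * b' + a' * b) * dot U V + b * b' * dot V V + g * g' * dot N N
  + (a * g' + a' * g) * dot U N + (b * g' + b' * g) * dot V N.
Proof. dpt U; dpt V; dpt N; unf; ring. Qed.

Lemma gram_det (U V N : pt) :
  det3 U V N ^ 2 =
  dot U U * (dot V V * dot N N - dot V N ^ 2) - dot U V * (dot U V * dot N N - dot V N * dot U N)
  + dot U N * (dot U V * dot V N - dot V V * dot U N).
Proof. dpt U; dpt V; dpt N; unf; ring. Qed.

Lemma lagrange (U V : pt) : 0 <= dot U U * dot V V - dot U V ^ 2.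
Proof.
  dpt U; dpt V; unf.
  replace ((x * x + y * y + z * z) * (x0 * x0 + y0 * y0 + z0 * z0) -
           (x * x0 + y * y0 + z * z0) ^ 2) with
    ((y * z0 - z * y0) ^ 2 + (z * x0 - x * z0) ^ 2 + (x * y0 - y * x0) ^ 2) by ring.
  pose proof (pow2_ge_0 (y * z0 - z * y0)). pose proof (pow2_ge_0 (z * x0 - x * z0)).
  pose proof (pow2_ge_0 (x * y0 - y * x0)). lra.
Qed.

Lemma pos_of_prod (a b : R) : 0 <= a -> 0 <= b -> 0 < a * b -> 0 < a /\ 0 < b.
Proof. intros. split; nra. Qed.

Ltac unfg := cbv [midpoint lerp comb det3 dot vsub vadd vscale mkpt px py pz fst snd].
Ltac ptq0 := cbv [midpoint lerp comb vsub vadd vscale mkpt px py pz fst snd];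
    apply (f_equal2 pair); [apply (f_equal2 pair)|]; first [ring|field].

Theorem theorem5 (A1 A2 A3 A4 F T12 T34 A1'' A4'' : pt) :
  nondegenerate_tetra A1 A2 A3 A4 ->
  edist A1 A4 + edist A2 A3 > edist A1 A2 + edist A3 A4 ->
  is_FT_point A1 A2 A3 A4 F ->
  in_tetra_interior A1 A2 A3 A4 F ->
  on_line T12 A1 A2 -> on_line T34 A3 A4 -> on_line F T12 T34 ->
  on_line A1'' A1 A2 -> on_line A4'' A3 A4 ->
  dot (vsub A4'' A1'') (vsub A2 A1) = 0 ->
  dot (vsub A4'' A1'') (vsub A4 A3) = 0 ->
  strictly_between A1'' A1 A2 ->
  strictly_between A4'' A4 A3 ->
  let H := edist A1'' A4'' in
  let phi := vangle (vsub A2 A1) (vsub A3 A4) in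
  let a12 := edist A1 A2 in
  let a34 := edist A3 A4 in
  let t12 := edist A1'' T12 in
  let t34 := edist A4'' T34 in
  let k1 := edist A1'' A1 in
  let k2 := edist A4'' A4 in
  let m12 := edist A1'' (midpoint A1 A2) in
  let m34 := edist A4'' (midpoint A3 A4) in
  let theta := angle A4 F A3 in
  (t34 - t12 * cos phi) / sqrt (H ^ 2 + t12 ^ 2 * sin phi ^ 2)
    = (m34 - t34) / (a34 / 2 * tan (theta / 2)) /\
  (t12 - t34 * cos phi) / sqrt (H ^ 2 + t34 ^ 2 * sin phi ^ 2)
    = (m12 - t12) / (a12 / 2 * tan (theta / 2)) /\
  cos (theta / 2) / sin (theta / 2)
    = (H ^ 2 + k1 * (t12 - t34 * cos phi) + k2 * (t34 - t12 * cos phi))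
      / ((t12 - k1) * sqrt (H ^ 2 + t34 ^ 2 * sin phi ^ 2)
         + (t34 - k2) * sqrt (H ^ 2 + t12 ^ 2 * sin phi ^ 2)).
Proof.
  intros Hnd Hineq HFT Hint HT12 HT34 HF _ _ Hp1 Hp2 Hb1 Hb4.
  intros H phi a12 a34 t12 t34 k1 k2 m12 m34 theta.
  destruct (interior_ne _ _ _ _ _ Hnd Hint) as [P1 [P2 [P3 P4]]].
  pose proof (FT_grad A1 A2 A3 A4 F (mkpt 1 0 0) HFT P1 P2 P3 P4) as FX.
  pose proof (FT_grad A1 A2 A3 A4 F (mkpt 0 1 0) HFT P1 P2 P3 P4) as FY.
  pose proof (FT_grad A1 A2 A3 A4 F (mkpt 0 0 1) HFT P1 P2 P3 P4) as FZ.
  assert (R1 : edist A1 F ^ 2 = dot (vsub A1 F) (vsub A1 F)) by (unfold edist, vnorm; apply pow2_sqrt; lra).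
  assert (R2 : edist A2 F ^ 2 = dot (vsub A2 F) (vsub A2 F)) by (unfold edist, vnorm; apply pow2_sqrt; lra).
  assert (R3 : edist A3 F ^ 2 = dot (vsub A3 F) (vsub A3 F)) by (unfold edist, vnorm; apply pow2_sqrt; lra).
  assert (R4 : edist A4 F ^ 2 = dot (vsub A4 F) (vsub A4 F)) by (unfold edist, vnorm; apply pow2_sqrt; lra).
  assert (Q1 : 0 < edist A1 F) by (unfold edist, vnorm; apply sqrt_lt_R0; lra).
  assert (Q2 : 0 < edist A2 F) by (unfold edist, vnorm; apply sqrt_lt_R0; lra).
  assert (Q3 : 0 < edist A3 F) by (unfold edist, vnorm; apply sqrt_lt_R0; lra).
  assert (Q4 : 0 < edist A4 F) by (unfold edist, vnorm; apply sqrt_lt_R0; lra).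
  assert (Eth : theta = acos (dot (vsub A4 F) (vsub A3 F) / (edist A4 F * edist A3 F))) by reflexivity.
  assert (EH : H = edist A1'' A4'') by reflexivity.
  assert (Ephi : phi = acos (dot (vsub A2 A1) (vsub A3 A4) / (edist A2 A1 * edist A3 A4))) by reflexivity.
  assert (Ea12 : a12 = edist A1 A2) by reflexivity.
  assert (Ea34 : a34 = edist A3 A4) by reflexivity.
  assert (Et12 : t12 = edist A1'' T12) by reflexivity.
  assert (Et34 : t34 = edist A4'' T34) by reflexivity.
  assert (Ek1 : k1 = edist A1'' A1) by reflexivity.
  assert (Ek2 : k2 = edist A4'' A4) by reflexivity.
  assert (Em12 : m12 = edist A1'' (midpoint A1 A2)) by reflexivity.
  assert (Em34 : m34 = edist A4'' (midpoint A3 A4)) by reflexivity.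
  clearbody H phi a12 a34 t12 t34 k1 k2 m12 m34 theta.
  remember (edist A1 F) as r1 eqn:Er1. remember (edist A2 F) as r2 eqn:Er2.
  remember (edist A3 F) as r3 eqn:Er3. remember (edist A4 F) as r4 eqn:Er4.
  clear Er1 Er2 Er3 Er4 HFT Hint Hineq P1 P2 P3 P4.
  destruct Hb1 as [s1 [Hs1 EA1]]. destruct Hb4 as [s2 [Hs2 EA4]].
  destruct HT12 as [sg ET12]. destruct HT34 as [rh ET34]. destruct HF as [l EF].
  subst F. subst T12 T34. subst A1 A4.
  destruct A1'' as [[o1 o2] o3], A2 as [[p1 p2] p3], A3 as [[q1 q2] q3], A4'' as [[w1 w2] w3].
  set (U := vsub (p1, p2, p3) (o1, o2, o3)).
  set (V := vsub (q1, q2, q3) (w1, w2, w3)).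
  set (N := vsub (w1, w2, w3) (o1, o2, o3)).
  set (tau1 := s1 + sg * (1 - s1)).
  set (tau2 := 1 + rh * (s2 - 1)).
  set (A1 := lerp (o1, o2, o3) (p1, p2, p3) s1) in *.
  set (A4 := lerp (w1, w2, w3) (q1, q2, q3) s2) in *.
  set (F := lerp (lerp A1 (p1, p2, p3) sg) (lerp (q1, q2, q3) A4 rh) l) in *.
  assert (V1 : vsub A1 F = comb U V N (s1 - (1-l)*tau1) (-l*tau2) (-l)) by (unfold U, V, N, tau1, tau2, F, A1, A4; ptq0).
  assert (V2 : vsub (p1, p2, p3) F = comb U V N (1 - (1-l)*tau1) (-l*tau2) (-l)) by (unfold U, V, N, tau1, tau2, F, A1, A4; ptq0).
  assert (V3 : vsub (q1, q2, q3) F = comb U V N (-(1-l)*tau1) (1 - l*tau2) (1-l)) by (unfold U, V, N, tau1, tau2, F, A1, A4; ptq0).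
  assert (V4 : vsub A4 F = comb U V N (-(1-l)*tau1) (s2 - l*tau2) (1-l)) by (unfold U, V, N, tau1, tau2, F, A1, A4; ptq0).
  assert (W1 : vsub (o1, o2, o3) (lerp A1 (p1, p2, p3) sg) = comb U V N (-tau1) 0 0) by (unfold U, V, N, tau1, tau2, A1; ptq0).
  assert (W2 : vsub (w1, w2, w3) (lerp (q1, q2, q3) A4 rh) = comb U V N 0 (-tau2) 0) by (unfold U, V, N, tau1, tau2, A4; ptq0).
  assert (W3 : vsub (o1, o2, o3) (w1, w2, w3) = comb U V N 0 0 (-1)) by (unfold U, V, N; ptq0).
  assert (W4 : vsub (o1, o2, o3) A1 = comb U V N (-s1) 0 0) by (unfold U, V, N, tau1, tau2, A1; ptq0).
  assert (W5 : vsub (w1, w2, w3) A4 = comb U V N 0 (-s2) 0) by (unfold U, V, N, tau1, tau2, A4; ptq0).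
  assert (W6 : vsub A1 (p1, p2, p3) = comb U V N (s1-1) 0 0) by (unfold U, V, N, tau1, tau2, A1; ptq0).
  assert (W7 : vsub (q1, q2, q3) A4 = comb U V N 0 (1-s2) 0) by (unfold U, V, N, tau1, tau2, A4; ptq0).
  assert (W8 : vsub (p1, p2, p3) A1 = comb U V N (1-s1) 0 0) by (unfold U, V, N, tau1, tau2, A1; ptq0).
  assert (W9 : vsub (o1, o2, o3) (midpoint A1 (p1, p2, p3)) = comb U V N (-((1+s1)/2)) 0 0) by (unfold U, V, N, tau1, tau2, A1; ptq0).
  assert (W10 : vsub (w1, w2, w3) (midpoint (q1, q2, q3) A4) = comb U V N 0 (-((1+s2)/2)) 0) by (unfold U, V, N, tau1, tau2, A4; ptq0).
  assert (HUN : dot U N = 0).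
  { assert (dot (vsub (w1, w2, w3) (o1, o2, o3)) (vsub (p1, p2, p3) A1) = (1 - s1) * dot U N)
      by (unfold U, N, A1; unfg; ring).
    assert (h : (1 - s1) * dot U N = 0) by lra. apply Rmult_integral in h. destruct h; lra. }
  assert (HVN : dot V N = 0).
  { assert (dot (vsub (w1, w2, w3) (o1, o2, o3)) (vsub A4 (q1, q2, q3)) = (s2 - 1) * dot V N)
      by (unfold V, N, A4; unfg; ring).
    assert (h : (s2 - 1) * dot V N = 0) by lra. apply Rmult_integral in h. destruct h; lra. }
  assert (HD : det3 U V N <> 0).
  { intros h. apply Hnd. 
    replace (det3 (vsub (p1, p2, p3) A1) (vsub (q1, q2, q3) A1) (vsub A4 A1)) with
      ((1 - s1) * (1 - s2) * det3 U V N) by (unfold U, V, N, A1, A4; unfg; ring).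
    rewrite h. ring. }
  pose proof (gram_det U V N) as GD. rewrite HUN, HVN in GD.
  pose proof (lagrange U V) as LG. pose proof (dot_nonneg N) as NN.
  pose proof (dot_nonneg U) as UU. pose proof (dot_nonneg V) as VV.
  assert (Hd2 : 0 < dot N N * (dot U U * dot V V - dot U V ^ 2)).
  { replace (dot N N * (dot U U * dot V V - dot U V ^ 2)) with (Rsqr (det3 U V N))
      by (unfold Rsqr; replace (det3 U V N * det3 U V N) with (det3 U V N ^ 2) by ring; rewrite GD; ring).
    apply Rsqr_pos_lt. exact HD. }
  destruct (pos_of_prod _ _ NN LG Hd2) as [PN PUV].
  assert (PUV' : 0 < dot U U * dot V V) by (pose proof (pow2_ge_0 (dot U V)); lra).
  destruct (pos_of_prod _ _ UU VV PUV') as [PU PV].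
  set (L1 := sqrt (dot U U)). set (L2 := sqrt (dot V V)). set (Hh := sqrt (dot N N)).
  assert (EL1 : L1 ^ 2 = dot U U) by (apply pow2_sqrt; lra).
  assert (EL2 : L2 ^ 2 = dot V V) by (apply pow2_sqrt; lra).
  assert (EHh : Hh ^ 2 = dot N N) by (apply pow2_sqrt; lra).
  assert (PL1 : 0 < L1) by (apply sqrt_lt_R0; lra).
  assert (PL2 : 0 < L2) by (apply sqrt_lt_R0; lra).
  assert (PHh : 0 < Hh) by (apply sqrt_lt_R0; lra).
  set (c := dot U V / (L1 * L2)).
  assert (Hc : c ^ 2 < 1).
  { assert (E : c ^ 2 * (dot U U * dot V V) = dot U V ^ 2)
      by (unfold c; rewrite <- EL1, <- EL2; field; lra).
    nra. }
  assert (GE : forall a b g a' b' g', dot (comb U V N a b g) (comb U V N a' b' g') =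
                                      gram L1 L2 c Hh a b g a' b' g').
  { intros. rewrite dot_comb, HUN, HVN, <- EL1, <- EL2, <- EHh. unfold gram, c. field. lra. }
  rewrite V1, GE in R1. rewrite V2, GE in R2. rewrite V3, GE in R3. rewrite V4, GE in R4.
  rewrite V1, V2, V3, V4 in FX, FY, FZ.
  assert (Gv : comb U V N
     ((s1 - (1-l)*tau1) / r1 + (1 - (1-l)*tau1) / r2 + (-(1-l)*tau1) / r3 + (-(1-l)*tau1) / r4)
     ((-l*tau2) / r1 + (-l*tau2) / r2 + (1 - l*tau2) / r3 + (s2 - l*tau2) / r4)
     ((-l) / r1 + (-l) / r2 + (1-l) / r3 + (1-l) / r4) = mkpt 0 0 0).
  { match type of FX with ?a = 0 => match type of FY with ?b = 0 => match type of FZ with ?d = 0 =>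
      transitivity (mkpt a b d); [ | rewrite FX, FY, FZ; reflexivity] end end end.
    cbv [midpoint lerp comb dot vsub vadd vscale mkpt px py pz fst snd].
    apply (f_equal2 pair); [apply (f_equal2 pair)|]; field; repeat split; lra. }
  destruct (indep _ _ _ _ _ _ HD Gv) as [EU [EV EN]].
  pose proof (core L1 L2 Hh c s1 s2 tau1 tau2 l r1 r2 r3 r4 PL1 PL2 PHh Hc Hs1 Hs2 Q1 Q2 Q3 Q4
                R1 R2 R3 R4 EU EV EN) as C.
  destruct C as [[Pt1 Pt2] [C1 [C2 C3]]].
  assert (eH : H = Hh).
  { rewrite EH. unfold edist, vnorm. rewrite W3, GE.
    replace (gram L1 L2 c Hh 0 0 (-1) 0 0 (-1)) with (Hh ^ 2) by (unfold gram; ring).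
    apply sqrt_pow2; lra. }
  assert (et12 : t12 = tau1 * L1).
  { rewrite Et12. unfold edist, vnorm. rewrite W1, GE.
    replace (gram L1 L2 c Hh (-tau1) 0 0 (-tau1) 0 0) with ((tau1 * L1) ^ 2) by (unfold gram; ring).
    apply sqrt_pow2; apply Rmult_le_pos; lra. }
  assert (et34 : t34 = tau2 * L2).
  { rewrite Et34. unfold edist, vnorm. rewrite W2, GE.
    replace (gram L1 L2 c Hh 0 (-tau2) 0 0 (-tau2) 0) with ((tau2 * L2) ^ 2) by (unfold gram; ring).
    apply sqrt_pow2; apply Rmult_le_pos; lra. }
  assert (ek1 : k1 = s1 * L1).
  { rewrite Ek1. unfold edist, vnorm. rewrite W4, GE.
    replace (gram L1 L2 c Hh (-s1) 0 0 (-s1) 0 0) with ((s1 * L1) ^ 2) by (unfold gram; ring).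
    apply sqrt_pow2; apply Rmult_le_pos; lra. }
  assert (ek2 : k2 = s2 * L2).
  { rewrite Ek2. unfold edist, vnorm. rewrite W5, GE.
    replace (gram L1 L2 c Hh 0 (-s2) 0 0 (-s2) 0) with ((s2 * L2) ^ 2) by (unfold gram; ring).
    apply sqrt_pow2; apply Rmult_le_pos; lra. }
  assert (ea12 : a12 = (1 - s1) * L1).
  { rewrite Ea12. unfold edist, vnorm. rewrite W6, GE.
    replace (gram L1 L2 c Hh (s1 - 1) 0 0 (s1 - 1) 0 0) with (((1 - s1) * L1) ^ 2) by (unfold gram; ring).
    apply sqrt_pow2; apply Rmult_le_pos; lra. }
  assert (ea34 : a34 = (1 - s2) * L2).
  { rewrite Ea34. unfold edist, vnorm. rewrite W7, GE.
    replace (gram L1 L2 c Hh 0 (1 - s2) 0 0 (1 - s2) 0) with (((1 - s2) * L2) ^ 2) by (unfold gram; ring).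
    apply sqrt_pow2; apply Rmult_le_pos; lra. }
  assert (em12 : m12 = (1 + s1) / 2 * L1).
  { rewrite Em12. unfold edist, vnorm. rewrite W9, GE.
    replace (gram L1 L2 c Hh (-((1+s1)/2)) 0 0 (-((1+s1)/2)) 0 0) with (((1 + s1) / 2 * L1) ^ 2)
      by (unfold gram; field).
    apply sqrt_pow2. apply Rmult_le_pos; lra. }
  assert (em34 : m34 = (1 + s2) / 2 * L2).
  { rewrite Em34. unfold edist, vnorm. rewrite W10, GE.
    replace (gram L1 L2 c Hh 0 (-((1+s2)/2)) 0 0 (-((1+s2)/2)) 0) with (((1 + s2) / 2 * L2) ^ 2)
      by (unfold gram; field).
    apply sqrt_pow2. apply Rmult_le_pos; lra. }
  assert (ephi : phi = acos c).
  { rewrite Ephi. f_equal. unfold edist, vnorm. rewrite W8, W7, !GE.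
    replace (gram L1 L2 c Hh (1 - s1) 0 0 (1 - s1) 0 0) with (((1 - s1) * L1) ^ 2) by (unfold gram; ring).
    replace (gram L1 L2 c Hh 0 (1 - s2) 0 0 (1 - s2) 0) with (((1 - s2) * L2) ^ 2) by (unfold gram; ring).
    rewrite !sqrt_pow2 by (apply Rmult_le_pos; lra). unfold gram. field.
    repeat split; apply Rgt_not_eq; repeat apply Rmult_lt_0_compat; lra. }
  assert (Hc1 : -1 <= c <= 1) by (clear - Hc; nra).
  assert (ecos : cos phi = c) by (rewrite ephi; apply cos_acos; exact Hc1).
  assert (esin : sin phi ^ 2 = 1 - c ^ 2).
  { rewrite ephi, sin_acos by exact Hc1. rewrite pow2_sqrt; unfold Rsqr; [ring| clear - Hc; unfold Rsqr; nra]. }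
  assert (eth : theta = acos (gram L1 L2 c Hh (-(1-l)*tau1) (s2 - l*tau2) (1-l) (-(1-l)*tau1) (1 - l*tau2) (1-l) / (r4 * r3))).
  { rewrite Eth. rewrite V4, V3, GE. reflexivity. }
  rewrite ecos, esin, eH, et12, et34, ek1, ek2, ea12, ea34, em12, em34, eth.
  unfold tan.
  exact (conj C1 (conj C2 C3)).
Qed.
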